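(* Let $n\in\mathbb{N}$ and $\alpha=(a_1,\dots,a_n)\in PP_n$. Define $\mathrm{T}(\alpha)=(b_1,\dots,b_n)$ recursively by $b_1=a_1$ and, for $2\le i\le n$, $$b_i=\begin{cases} a_i-1 & \text{if } a_i\neq 1 \text{ and } a_i=b_j \text{ for some } 1\le j<i,\\ a_i & \text{otherwise.}\end{cases}$$ Then $\alpha$ is a $1$-Naples (Naples) parking function, i.e. $\alpha\in PF_{n,1}$, if and only if $\mathrm{T}(\alpha)$ is a classical parking function, i.e. $\mathrm{T}(\alpha)\in PF_{n,0}$.
   Context: For $n\in\mathbb{N}$ let $[n]=\{1,\dots,n\}$ and $PP_n=[n]^n$ (parking preferences). For an integer $k\ge 0$, the $k$-Naples parking rule: there are $n$ spots numbered $1,\dots,n$ west to east, initially empty; cars $c_1,\dots,c_n$ arrive in order, car $c_i$ preferring spot $a_i$. If spot $a_i$ is empty, $c_i$ parks there. Otherwise $c_i$ checks spots $a_i-1,\dots,a_i-k$ in this order (skipping those $<1$) and parks in the first empty one; if all are occupied, it drives east and parks in the first empty spot numbered greater than $a_i$, failing to park if none exists. $PF_{n,k}$ is the set of $\alpha\in PP_n$ for which all cars park. $PF_{n,0}=PF_n$ is the set of classical parking functions (equivalently, $\alpha$ whose weakly increasing rearrangement $(\beta_1,\dots,\beta_n)$ satisfies $\beta_i\le i$ for all $i$). *)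

(* Defs.v *)
From mathcomp Require Import all_boot.
Set Implicit Arguments. Unset Strict Implicit. Unset Printing Implicit Defensive.

(* Preferences are sequences of naturals; spots are numbered 1..n. *)
Definition PP (n : nat) (a : seq nat) : bool :=
  (size a == n) && all (fun x => (1 <= x <= n)%N) a.

Definition back_spots (k a : nat) : seq nat :=
  [seq a - j | j <- iota 1 k & (j < a)%N].

Definition fwd_spots (n a : nat) : seq nat := iota a.+1 (n - a).

(* Where a car preferring spot [a] parks under the k-Naples rule, given the
   list [occ] of occupied spots; None if it fails to park. *)
Definition park_car (k n : nat) (occ : seq nat) (a : nat) : option nat :=
  if a \notin occ then Some a
  else match [seq s <- back_spots k a | s \notin occ] with
       | s :: _ => Some s
       | [::] => match [seq s <- fwd_spots n a | s \notin occ] with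
                 | s :: _ => Some s
                 | [::] => None
                 end
       end.

Fixpoint all_park (k n : nat) (occ : seq nat) (prefs : seq nat) : bool :=
  match prefs with
  | [::] => true
  | a :: r => match park_car k n occ a with
              | Some s => all_park k n (s :: occ) r
              | None => false
              end
  end.

(* PF_{n,k}: k-Naples parking functions of length n.  PF n 0 = classical. *)
Definition PF (n k : nat) (a : seq nat) : bool := PP n a && all_park k n [::] a.

(* The map T: b_1 = a_1, b_i = a_i - 1 if a_i <> 1 and a_i = b_j for some j < i,
   else b_i = a_i.  [prev] holds b_1..b_{i-1}. *)
Fixpoint T_aux (prev : seq nat) (a : seq nat) : seq nat :=
  match a with
  | [::] => [::]
  | x :: r => let y := if (x != 1) && (x \in prev) then x.-1 else x in
              y :: T_aux (rcons prev y) r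
  end.

Definition T (a : seq nat) : seq nat := T_aux [::] a.

(* Main.v *)
Require Import Defs.
From mathcomp Require Import all_boot zify.

Lemma first_filter (p : pred nat) k m s r :
  [seq x <- iota m k | p x] = s :: r -> forall x, m <= x < s -> ~~ p x.
Proof.
elim: k m => [|k IH] m //=.
case: ifP => pm.
  by case=> <- _ x; rewrite leqNgt => /andP[/negP].
move=> /IH H x /andP[mx xs]; move: mx; rewrite leq_eqVlt => /orP[/eqP<-|mx].
  by rewrite pm.
by apply: H; rewrite mx.
Qed.

Lemma mem_filter_head (p : pred nat) l s r :
  [seq x <- l | p x] = s :: r -> (s \in l) && p s.
Proof. by move=> H; rewrite andbC -mem_filter H mem_head. Qed.

Lemma park0_spec n occ b s :
  park_car 0 n occ b = Some s -> s = b \/ (b \in occ /\ s.-1 \in occ).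
Proof.
rewrite /park_car /back_spots /=.
case: ifP => bo; first by case=> ->; left.
move/negbFE: bo => bo.
case E: [seq x <- fwd_spots n b | x \notin occ] => [//|s' r] [<-].
right; split => //.
have /andP[] := mem_filter_head _ _ _ _ E; rewrite /fwd_spots mem_iota => /andP[bs _] _.
have := first_filter _ _ _ _ _ E.
case: s' bs {E} => [//|s'] bs /= H.
move: bs; rewrite ltnS leq_eqVlt => /orP[/eqP<-//=|bs].
by have := H s'; rewrite bs leqnn => /(_ isT) /negbNE.
Qed.

Definition bval (prev : seq nat) (x : nat) :=
  if (x != 1) && (x \in prev) then x.-1 else x.

Lemma park_step n occ prev a :
  0 < a -> {subset prev <= occ} ->
  {in occ, forall x, (x \in prev) || (x.-1 \in occ)} ->
  park_car 1 n occ a = park_car 0 n occ (bval prev a).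
Proof.
move=> a0 sub inv; rewrite /bval /park_car /back_spots /=.
case: (boolP (a \in occ)) => ao; last first.
  have -> : (a \in prev) = false by apply/negbTE; apply: contra ao; apply: sub.
  by rewrite andbF ao.
rewrite /=.
case: (eqVneq a 1) => [e1|a1]; first by subst a; rewrite ao.
have a2 : 1 < a by rewrite ltn_neqAle eq_sym a1 a0.
rewrite a2 /= subn1.
case: (boolP (a \in prev)) => ap /=.
  case: ifP => //= a'o.
  rewrite /fwd_spots prednK //.
  case E: (n - a.-1) => [|k].
    by have -> : n - a = 0 by lia.
  have -> : n - a = k by lia.
  by rewrite /= ao.
rewrite ao /=.
by have := inv a ao; rewrite (negbTE ap) /= => ->.
Qed.

Lemma main_gen n occ prev r :
  all (fun x => 0 < x) r -> {subset prev <= occ} ->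
  {in occ, forall x, (x \in prev) || (x.-1 \in occ)} ->
  all_park 1 n occ r = all_park 0 n occ (T_aux prev r).
Proof.
elim: r occ prev => [//|a r IH] occ prev /= /andP[a0 r0] sub inv.
rewrite -/(bval prev a) (park_step n _ _ _ a0 sub inv).
case E: (park_car 0 n occ (bval prev a)) => [s|] //.
have [sb|[bo so]] := park0_spec _ _ _ _ E; apply: IH => //.
- move=> x; rewrite mem_rcons inE => /orP[/eqP->|/sub]; rewrite inE ?sb ?eqxx //.
  by move=> ->; rewrite orbT.
- move=> x; rewrite inE => /orP[/eqP->|xo]; first by rewrite sb mem_rcons mem_head.
  by have /orP[xp|xo'] := inv x xo; rewrite mem_rcons !inE ?xp ?xo' !orbT.
- move=> x; rewrite mem_rcons inE => /orP[/eqP->|/sub]; rewrite inE ?bo ?orbT //.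
  by move=> ->; rewrite orbT.
- move=> x; rewrite inE => /orP[/eqP->|xo]; first by rewrite inE so !orbT.
  by have /orP[xp|xo'] := inv x xo; rewrite mem_rcons !inE ?xp ?xo' !orbT.
Qed.


Lemma T_aux_size prev a : size (T_aux prev a) = size a.
Proof. by elim: a prev => //= x r IH prev; rewrite IH. Qed.

Lemma T_aux_all n prev a : all (fun x => 1 <= x <= n) a ->
  all (fun x => 1 <= x <= n) (T_aux prev a).
Proof.
elim: a prev => //= x r IH prev /andP[/andP[x1 xn] ra]; rewrite IH // andbT.
case: ifP => [/andP[x1' _]|_]; last by rewrite x1 xn.
have x2 : 1 < x by rewrite ltn_neqAle eq_sym x1' x1.
by rewrite -ltnS prednK ?x2 //= (leq_trans (leq_pred x) xn).
Qed.

Theorem theorem1p2 (n : nat) (a : seq nat) :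
  PP n a -> (PF n 1 a <-> PF n 0 (T a)).
Proof.
move=> Ha; have HT : PP n (T a).
  move: Ha; rewrite /PP /T T_aux_size => /andP[-> H] /=; exact: T_aux_all.
rewrite /PF Ha HT /T (main_gen n [::] [::]) //.
by move: Ha => /andP[_]; apply: sub_all => x /andP[].
Qed.
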